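(* Let $n\ge 3$ and $m\ge 1$ be integers, and let $Q_{n,1},\dots,Q_{n,m}$ be the partition of $\{0,1,\dots,m+1\}^n$ defined below. Then for every $1\le i<j\le m$ and every unit vector $v\in\mathbb{Z}^n$ parallel to a coordinate axis, $Q_{n,i}+(m+2)v$ and $Q_{n,j}$ are adjacent (the partition is externally adjacent).
   Context: Define $f:\{0,\dots,m+1\}^3\to\{1,\dots,m\}$ by: $f(x,y,z)=y$ if $0\le x\le m$, $1\le y\le m$, $z=0$; $f=x$ if $1\le x\le m$, $0\le y\le m$, $z=m+1$; $f=y$ if $x=0$, $1\le y\le m$, $1\le z\le m$; $f=x$ if $1\le x\le m$, $y=0$, $1\le z\le m$; $f=z$ if $1\le x\le m+1$, $1\le y\le m+1$, $1\le z\le m$; and $f=1$ at all remaining points. Let $f_3=f$ and for $n\ge4$: $f_n(x_1,\dots,x_n)=f_{n-1}(x_1,x_2,x_3,\dots,x_{n-1})$ if $0\le x_n\le m$, and $f_n(x_1,\dots,x_n)=f_{n-1}(m+1-x_2,x_1,x_3,\dots,x_{n-1})$ if $x_n=m+1$. Let $Q_{n,i}=\{x\in\{0,\dots,m+1\}^n: f_n(x)=i\}$. Two disjoint sets $P,Q\subset\mathbb{Z}^n$ are adjacent if there exist $p\in P$, $q\in Q$ and a unit vector $v$ parallel to a coordinate axis with $p+v=q$. *)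

(* Defs.v *)
From HB Require Import structures.
From mathcomp Require Import all_boot all_order all_algebra.
Set Implicit Arguments. Unset Strict Implicit. Unset Printing Implicit Defensive.
Import Order.TTheory GRing.Theory Num.Theory.

Definition f3 (m x y z : nat) : nat :=
  if [&& x <= m, 1 <= y <= m & z == 0] then y
  else if [&& 1 <= x <= m, y <= m & z == m.+1] then x
  else if [&& x == 0, 1 <= y <= m & 1 <= z <= m] then y
  else if [&& 1 <= x <= m, y == 0 & 1 <= z <= m] then x
  else if [&& 1 <= x <= m.+1, 1 <= y <= m.+1 & 1 <= z <= m] then z
  else 1.

(* f_k on a point given by its coordinates x 0, x 1, ..., x (k-1)
   (0-based; the paper's x_1 ... x_k). For k <= 3 this is f_3. *)
Fixpoint fN (m k : nat) (x : nat -> nat) : nat :=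
  match k with
  | 0 | 1 | 2 | 3 => f3 m (x 0) (x 1) (x 2)
  | k'.+1 =>
      if x k' <= m then fN m k' x
      else fN m k' (fun j => if j == 0 then m.+1 - x 1
                             else if j == 1 then x 0 else x j)
  end.

(* coordinates of a point of Z^n as a nat sequence (absolute values,
   only used on points with nonnegative coordinates) *)
Definition coords (n : nat) (x : 'rV[int]_n) : nat -> nat :=
  fun j => match @insub nat (fun j => j < n) 'I_n j with
           | Some k => absz (x ord0 k)
           | None => 0
           end.

Definition Qset (n m i : nat) (x : 'rV[int]_n) : Prop :=
  (forall k : 'I_n, (0 <= x ord0 k)%R /\ (x ord0 k <= (m.+1)%:Z)%R) /\ fN m n (coords x) = i.

Arguments Qset n m i x : clear implicits.

Definition axis_unit (n : nat) (v : 'rV[int]_n) : Prop :=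
  exists k : 'I_n, v = delta_mx ord0 k \/ v = (- delta_mx ord0 k)%R.

Definition translate (n : nat) (P : 'rV[int]_n -> Prop) (w : 'rV[int]_n) :
  'rV[int]_n -> Prop := fun x => exists2 p, P p & x = (p + w)%R.

Definition adjacent (n : nat) (P Q : 'rV[int]_n -> Prop) : Prop :=
  (forall x, ~ (P x /\ Q x)) /\
  exists p q v, [/\ P p, Q q, axis_unit v & (p + v)%R = q].

(* Main.v *)
Require Import Defs.
From mathcomp Require Import all_boot all_order all_algebra.
From mathcomp Require Import zify.
Import GRing.Theory.

Lemma fN_S m k x : fN m k.+4 x = if x k.+3 <= m then fN m k.+3 x
  else fN m k.+3 (fun j => if j == 0 then m.+1 - x 1
                             else if j == 1 then x 0 else x j).
Proof. by []. Qed.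

Lemma fNA m k x : (forall l, 3 <= l < k.+3 -> x l <= m) ->
  fN m k.+3 x = f3 m (x 0) (x 1) (x 2).
Proof.
elim: k x => [|k IH] x hx; first by [].
rewrite fN_S hx; last by lia.
apply: IH => l hl; apply: hx; lia.
Qed.

Lemma fNB m k x K : 3 <= K < k.+3 -> x K = m.+1 ->
  (forall l, 3 <= l < k.+3 -> l != K -> x l <= m) ->
  fN m k.+3 x = f3 m (m.+1 - x 1) (x 0) (x 2).
Proof.
elim: k x => [|k IH] x hK hxK hx; first by lia.
rewrite fN_S.
case: (eqVneq K k.+3) => [eK|nK].
  have -> : (x k.+3 <= m) = false by rewrite -eK hxK; lia.
  rewrite fNA //= => l hl.
  have -> : (l == 0) = false by lia.
  have -> : (l == 1) = false by lia.
  apply: hx; lia.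
rewrite hx; [|lia|lia].
apply: IH => //; first lia.
move=> l hl hlK; apply: hx => //; lia.
Qed.

Lemma fNext m k x y : (forall l, l < k.+3 -> x l = y l) ->
  fN m k.+3 x = fN m k.+3 y.
Proof.
elim: k x y => [|k IH] x y hxy.
  by rewrite /= !hxy.
rewrite !fN_S hxy //.
case: ifP => _; apply: IH => l hl; first by apply: hxy; lia.
case: ifP => _; first by rewrite hxy.
case: ifP => _; first by rewrite hxy.
apply: hxy; lia.
Qed.

Definition pt n (g : nat -> nat) : 'rV[int]_n := \row_(l < n) (Posz (g l)).

Lemma coords_pt n g l : l < n -> coords (pt n g) l = g l.
Proof.
move=> hl; rewrite /coords; case: insubP => [u _ eu|]; last by rewrite hl.
by rewrite mxE -eu.
Qed.

Lemma fN_pt m n g : 3 <= n -> fN m n (coords (pt n g)) = fN m n g.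
Proof.
case: n => [|[|[|k]]] // _; apply: fNext => l hl; exact: coords_pt.
Qed.

Definition mk (a b c K t : nat) : nat -> nat := fun l =>
  if l == K then t else if l == 0 then a else if l == 1 then b
  else if l == 2 then c else 0.

Lemma fN_mkA m n a b c K t : 3 <= n -> (K < 3 \/ t <= m) ->
  fN m n (mk a b c K t) = f3 m (mk a b c K t 0) (mk a b c K t 1) (mk a b c K t 2).
Proof.
case: n => [|[|[|k]]] // _ h; apply: fNA => l hl; rewrite /mk.
case: ifP => e; first by lia.
have -> : (l == 0) = false by lia.
have -> : (l == 1) = false by lia.
have -> : (l == 2) = false by lia.
done.
Qed.

Lemma fN_mkB m n a b c K : 3 <= K < n ->
  fN m n (mk a b c K m.+1) = f3 m (m.+1 - b) a c.
Proof.
case: n => [|[|[|k]]] //; try lia. move=> hK.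
rewrite (@fNB m k _ K) //; last first.
  move=> l hl hlK; rewrite /mk (negbTE hlK).
  have -> : (l == 0) = false by lia.
  have -> : (l == 1) = false by lia.
  have -> : (l == 2) = false by lia.
  done.
  by rewrite /mk eqxx.
rewrite /mk.
have -> : (0 == K) = false by lia.
have -> : (1 == K) = false by lia.
have -> : (2 == K) = false by lia.
done.
Qed.

Ltac f3solve := rewrite /f3; repeat case: ifP; lia.

Lemma key_pos n m i j K : 3 <= n -> K < n -> 1 <= i -> i < j -> j <= m ->
  exists a b c, [/\ a <= m.+1, b <= m.+1, c <= m.+1,
    fN m n (mk a b c K 0) = i & fN m n (mk a b c K m.+1) = j].
Proof.
move=> hn hK hi hij hj.
case: K hK => [|[|[|K]]] hK.
- exists 0, i, j; split; try lia; rewrite fN_mkA //; try (by left); rewrite /mk /=; f3solve.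
- exists i, 0, j; split; try lia; rewrite fN_mkA //; try (by left); rewrite /mk /=; f3solve.
- exists j, i, 0; split; try lia; rewrite fN_mkA //; try (by left); rewrite /mk /=; f3solve.
- exists j, i, 0; split; try lia.
  + rewrite fN_mkA //; last by right; lia. rewrite /mk /=; f3solve.
  + rewrite fN_mkB //; f3solve.
Qed.

Lemma key_neg n m i j K : 3 <= n -> K < n -> 1 <= i -> i < j -> j <= m ->
  exists a b c, [/\ a <= m.+1, b <= m.+1, c <= m.+1,
    fN m n (mk a b c K m.+1) = i & fN m n (mk a b c K 0) = j].
Proof.
move=> hn hK hi hij hj.
case: K hK => [|[|[|K]]] hK.
- exists 0, j, i; split; try lia; rewrite fN_mkA //; try (by left); rewrite /mk /=; f3solve.
- exists j, 0, i; split; try lia; rewrite fN_mkA //; try (by left); rewrite /mk /=; f3solve.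
- exists i, j, 0; split; try lia; rewrite fN_mkA //; try (by left); rewrite /mk /=; f3solve.
- exists i, j, 0; split; try lia.
  + rewrite fN_mkB //; f3solve.
  + rewrite fN_mkA //; last by right; lia. rewrite /mk /=; f3solve.
Qed.

Lemma mk_le a b c K t m : a <= m.+1 -> b <= m.+1 -> c <= m.+1 -> t <= m.+1 ->
  forall l, mk a b c K t l <= m.+1.
Proof. move=> *; rewrite /mk; repeat case: ifP; lia. Qed.

Lemma Q_pt n m i g : 3 <= n -> (forall l, g l <= m.+1) -> fN m n g = i ->
  Qset n m i (pt n g).
Proof.
move=> hn hg hf; split; last by rewrite fN_pt.
move=> k; rewrite mxE; have := hg k; split; lia.
Qed.

Theorem lemma5p4 (n m : nat) (hn : 3 <= n) (hm : 1 <= m) (i j : nat)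
  (hij : [&& 1 <= i, i < j & j <= m]) (v : 'rV[int]_n) (hv : axis_unit v) :
  adjacent (translate (Qset n m i) (v *+ m.+2)%R) (Qset n m j).
Proof.
move/and3P: hij => [hi hij hj].
case: hv => k [->|->].
- have [a [b [c [ha hb hc h0 h1]]]] := key_pos n m i j k hn (ltn_ord k) hi hij hj.
  split.
    move=> x [[p [hp _] ->] [hq _]].
    have := hp k; have := hq k; rewrite mxE mulmxnE mxE !eqxx /=; lia.
  exists (pt n (mk a b c k 0) + delta_mx ord0 k *+ m.+2)%R,
    (pt n (mk a b c k m.+1)), (- delta_mx ord0 k)%R; split.
  + exists (pt n (mk a b c k 0)) => //; apply: Q_pt => //; exact: mk_le.
  + apply: Q_pt => //; exact: mk_le.
  + by exists k; right.
  + apply/rowP => l; rewrite mxE [X in (X + _)%R]mxE mulmxnE !mxE /mk eqxx /=.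
    case: (eqVneq l k) => [->|ne]; rewrite ?eqxx //=; first lia.
    have e : (nat_of_ord l == nat_of_ord k) = false by apply/negbTE; exact: ne.
    rewrite e; lia.
- have [a [b [c [ha hb hc h0 h1]]]] := key_neg n m i j k hn (ltn_ord k) hi hij hj.
  split.
    move=> x [[p [hp _] ->] [hq _]].
    have := hp k; have := hq k; rewrite mxE mulmxnE !mxE ?eqxx /=; lia.
  exists (pt n (mk a b c k m.+1) + (- delta_mx ord0 k) *+ m.+2)%R,
    (pt n (mk a b c k 0)), (delta_mx ord0 k)%R; split.
  + exists (pt n (mk a b c k m.+1)) => //; apply: Q_pt => //; exact: mk_le.
  + apply: Q_pt => //; exact: mk_le.
  + by exists k; left.
  + apply/rowP => l; rewrite mxE [X in (X + _)%R]mxE mulmxnE !mxE /mk eqxx /=.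
    case: (eqVneq l k) => [->|ne]; rewrite ?eqxx //=; first lia.
    have e : (nat_of_ord l == nat_of_ord k) = false by apply/negbTE; exact: ne.
    rewrite e; lia.
Qed.
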